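(* Fix $\mathbf{s} \in \mathcal{S}$. Then, for any decreasing positive sequence $\{\epsilon_l : l \in \mathbb{N}\}$ with $\lim_{l \to \infty} \epsilon_l = 0$, we have $\lim_{l \to \infty} \bar{\mathbf{p}}^{\epsilon_l}(\mathbf{s}) = \bar{\mathbf{p}}(\mathbf{s})$.
   Context: There are $N$ systems $\mathcal{A} = \{1,\ldots,N\}$. $B = [b_{i,j}]$ is a nonnegative $N\times N$ matrix with $b_{i,j} = \beta_{j,i} \ge 0$, $\beta_{i,i}=0$; the directed graph with an edge $(i,j)$ iff $\beta_{i,j}>0$ is weakly connected (not necessarily strongly connected). $\boldsymbol{\lambda} \in \mathbb{R}_+^N$ is the vector of external attack rates (some entries may be zero), $\boldsymbol{\delta} > \mathbf{0}$ the recovery rates, and $\mathbf{q}(\mathbf{s}) = (q_i(s_i))_i$ the breach probabilities with each $q_i:\mathbb{R}_+\to(0,1]$ decreasing, strictly convex, continuously differentiable; $\mathcal{S}\subset\mathbb{R}_+^N$ is convex. The state evolves by $\dot{\mathbf{p}}(t) = (\mathbf{1} - \mathbf{p}(t)) \circ \mathbf{q}(\mathbf{s}) \circ (\boldsymbol{\lambda} + B \mathbf{p}(t)) - \boldsymbol{\delta} \circ \mathbf{p}(t)$ ($\circ$ elementwise), and for fixed $\mathbf{s}$ this system has a unique stable equilibrium $\bar{\mathbf{p}}(\mathbf{s})$, which satisfies $(\mathbf{1} - \mathbf{p}) \circ (\boldsymbol{\lambda} + B \mathbf{p}) - \mathbf{q}(\mathbf{s})^{-1} \circ \boldsymbol{\delta}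 \circ \mathbf{p} = \mathbf{0}$ (this equation may have multiple solutions). For $\epsilon>0$, $\bar{\mathbf{p}}^{\epsilon}(\mathbf{s}) > \mathbf{0}$ is the unique strictly positive solution of the same equation with $\boldsymbol{\lambda}$ replaced by $\boldsymbol{\lambda}^{\epsilon} := \boldsymbol{\lambda} + \epsilon\mathbf{1}$. *)

(* Defs.v *)
From HB Require Import structures.
From mathcomp Require Import all_boot all_order all_algebra.
From mathcomp Require Import all_classical all_reals all_analysis.
Set Implicit Arguments. Unset Strict Implicit. Unset Printing Implicit Defensive.
Import Order.TTheory GRing.Theory Num.Theory.
Import numFieldNormedType.Exports.
Local Open Scope classical_set_scope.
Local Open Scope ring_scope.

Section SIS.
Variables (R : realType) (N : nat).

(* B i j = b_{i,j} = beta_{j,i}. *)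
Definition sis_field (B : 'I_N -> 'I_N -> R) (lam del : 'I_N -> R)
  (q : 'I_N -> R -> R) (s : 'I_N -> R) (p : 'I_N -> R) : 'I_N -> R :=
  fun i => (1 - p i) * q i (s i) * (lam i + \sum_(j < N) B i j * p j) - del i * p i.

Definition eq_equation (B : 'I_N -> 'I_N -> R) (lam del : 'I_N -> R)
  (q : 'I_N -> R -> R) (s : 'I_N -> R) (p : 'I_N -> R) : Prop :=
  forall i, (1 - p i) * (lam i + \sum_(j < N) B i j * p j)
            - (q i (s i))^-1 * del i * p i = 0.

Definition in_unit_cube (p : 'I_N -> R) : Prop := forall i, 0 <= p i <= 1.

Definition is_solution (B : 'I_N -> 'I_N -> R) (lam del : 'I_N -> R)
  (q : 'I_N -> R -> R) (s : 'I_N -> R) (x : R -> 'I_N -> R) : Prop :=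
  forall i, {within `[0, +oo[, continuous (fun t => x t i)} /\
    forall t : R, 0 < t ->
      is_derive t 1 (fun u => x u i) (sis_field B lam del q s (x t) i).

Definition is_equilibrium (B : 'I_N -> 'I_N -> R) (lam del : 'I_N -> R)
  (q : 'I_N -> R -> R) (s : 'I_N -> R) (p : 'I_N -> R) : Prop :=
  in_unit_cube p /\ forall i, sis_field B lam del q s p i = 0.

(* Local asymptotic stability (Lyapunov stability + local attractivity),
   relative to the state space [0,1]^N. *)
Definition is_stable_equilibrium (B : 'I_N -> 'I_N -> R) (lam del : 'I_N -> R)
  (q : 'I_N -> R -> R) (s : 'I_N -> R) (p : 'I_N -> R) : Prop :=
  is_equilibrium B lam del q s p /\
  (forall e : R, 0 < e -> exists2 d : R, 0 < d &
     forall x, is_solution B lam del q s x -> in_unit_cube (x 0) ->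
       (forall i, `|x 0 i - p i| < d) ->
       forall t : R, 0 <= t -> forall i, `|x t i - p i| < e) /\
  (exists2 d : R, 0 < d &
     forall x, is_solution B lam del q s x -> in_unit_cube (x 0) ->
       (forall i, `|x 0 i - p i| < d) ->
       forall i, (fun t => x t i) @ +oo --> p i).

(* The directed graph with edge (i,j) iff beta_{i,j} = B j i > 0 is weakly
   connected: its underlying undirected graph is connected. *)
Definition weakly_connected (B : 'I_N -> 'I_N -> R) : Prop :=
  forall i j : 'I_N, connect (fun a b => (0 < B b a) || (0 < B a b)) i j.

End SIS.

(* Main.v *)
Require Import Defs.
From HB Require Import structures.
From mathcomp Require Import all_boot all_order all_algebra.
From mathcomp Require Import all_classical all_reals all_analysis.
From mathcomp Require Import ring lra.
Import Order.TTheory GRing.Theory Num.Theory.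
Import numFieldNormedType.Exports.
Local Open Scope classical_set_scope.
Local Open Scope ring_scope.

Section Ana.
Variable R : realType.

Definition WC (f : R -> R) := forall t, 0 <= t -> forall e, 0 < e ->
  exists2 d, 0 < d & forall u, 0 <= u -> `|u - t| < d -> `|f u - f t| < e.

Lemma near_pt (P : R -> Prop) (t : R) : (\forall u \near t, P u) ->
  exists2 d, 0 < d & forall u, `|u - t| < d -> P u.
Proof.
move=> /nbhs_ballP [d d0 Hd]; exists d => // u Hu; apply: Hd.
by rewrite /ball /= distrC.
Qed.

Lemma cont_eps (f : R -> R) t : {for t, continuous f} -> forall e, 0 < e ->
  exists2 d, 0 < d & forall u, `|u - t| < d -> `|f u - f t| < e.
Proof.
move=> /cvgrPdist_lt H e e0; have := H e e0.
move=> /near_pt [d d0 Hd]; exists d => // u Hu.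
by rewrite distrC; apply: Hd.
Qed.

Lemma WC_within (f : R -> R) : {within `[0, +oo[, continuous f} -> WC f.
Proof.
move=> Hf t t0 e e0.
move: Hf => /continuous_within_itvcyP [Hin H0].
case: (ltrgtP t 0) => [|tp|->]; first by rewrite ltNge t0.
  have := Hin t; rewrite in_itv /= andbT => /(_ tp) => Hc.
  have [d d0 Hd] := @cont_eps f t Hc e e0; exists d => // u _; exact: Hd.
move: H0 => /cvgrPdist_lt /(_ e e0).
rewrite /at_right near_withinE => /near_pt [d d0 Hd]; exists d => // u u0 Hu.
case: (ltrgtP u 0) => [|up|->]; first by rewrite ltNge u0.
  by rewrite distrC; apply: Hd.
by rewrite subrr normr0.
Qed.

Lemma WC_B (f g : R -> R) : WC f -> WC g -> WC (fun t => f t - g t).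
Proof.
move=> Hf Hg t t0 e e0.
have e2 : 0 < e / 2 by rewrite divr_gt0.
have [d1 d10 H1] := Hf t t0 _ e2; have [d2 d20 H2] := Hg t t0 _ e2.
exists (Num.min d1 d2); first by rewrite lt_min d10.
move=> u u0; rewrite lt_min => /andP [h1 h2].
have := H1 u u0 h1; have := H2 u u0 h2.
have -> : f u - g u - (f t - g t) = (f u - f t) - (g u - g t) by ring.
move=> a b; apply: le_lt_trans (ler_normB _ _) _.
by rewrite (splitr e); apply: ltrD.
Qed.

Lemma WC_cont (f : R -> R) : (forall t, 0 <= t -> {for t, continuous f}) -> WC f.
Proof.
move=> Hf t t0 e e0; have [d d0 Hd] := @cont_eps f t (Hf t t0) e e0.
by exists d => // u _; apply: Hd.
Qed.

Lemma WC_cst (a : R) : WC (fun _ => a).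
Proof. by move=> t _ e e0; exists 1 => // u _ _; rewrite subrr normr0. Qed.

Lemma deriv_left (f : R -> R) (s dv : R) : is_derive s 1 f dv -> dv < 0 ->
  exists2 d, 0 < d & forall v, 0 < v -> v < d -> f s < f (s - v).
Proof.
move=> Hd dv0.
have cv : (fun h => h^-1 *: ((f \o shift s) (h *: 1) - f s)) @ 0^' --> dv.
  by rewrite -(@derive_val _ _ _ _ _ _ _ Hd); exact: (@ex_derive _ _ _ _ _ _ _ Hd).
have e0 : 0 < - dv / 2 by rewrite divr_gt0 // oppr_gt0.
move: cv => /cvgrPdist_lt /(_ _ e0).
rewrite near_withinE => /near_pt [d d0 H]; exists d => // v v0 vd.
have := H (- v); rewrite subr0 normrN gtr0_norm // => /(_ vd).
rewrite oppr_eq0 gt_eqF // => /(_ isT).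
rewrite /= scaler1 /GRing.scale /= (addrC _ s).
move=> HH.
move/ltr_normlP: HH => [h1 _].
set D := f (s - v) - f s in h1 *.
have h2 : 0 < v^-1 * D by rewrite invrN mulNr in h1; lra.
move: h2; rewrite pmulr_rgt0 ?invr_gt0 // /D; lra.
Qed.

Lemma exists_small (K : finType) (a : K -> R) : (forall k, 0 < a k) ->
  exists2 g, 0 < g & forall k, g < a k.
Proof.
move=> Ha; exists ((\big[Num.min/1]_k a k) / 2).
  by rewrite divr_gt0 //; apply: lt_bigmin => // k _.
move=> k; have h : \big[Num.min/1]_k a k <= a k := bigmin_le _ _ _.
have : 0 < \big[Num.min/1]_k a k by apply: lt_bigmin => // j _.
move: h; set m := \big[Num.min/1]_k a k; lra.
Qed.

Lemma barrier (K : finType) (h : K -> R -> R) (T : R) :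
  (forall k, WC (h k)) ->
  (forall k t, 0 < t -> t <= T -> (forall k', h k' t <= 0) -> h k t = 0 ->
      exists2 dv, is_derive t 1 (h k) dv & dv < 0) ->
  (forall k, h k 0 < 0) ->
  forall t, 0 <= t -> t <= T -> forall k, h k t < 0.
Proof.
move=> Hc Hd H0 t t0 tT k; rewrite ltNge; apply/negP => bad.
pose Bs := [set u : R | 0 <= u /\ exists k, 0 <= h k u].
have Bt : Bs t by split => //; exists k.
have lb0 : lbound Bs 0 by move=> u [].
have hlb : has_lbound Bs by exists 0.
have ne : Bs !=set0 by exists t.
pose s := inf Bs.
have s0 : 0 <= s := lb_le_inf ne lb0.
have st : s <= t := ge_inf hlb Bt.
have K1 : forall u, 0 <= u -> u < s -> forall k, h k u < 0.
  move=> u u0 us k'; rewrite ltNge; apply/negP => hu.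
  have : s <= u by apply: (ge_inf hlb); split => //; exists k'.
  by rewrite leNgt us.
have K2 : exists k, 0 <= h k s.
  case: (pselect (exists k, 0 <= h k s)) => // Hn; exfalso.
  have Hneg : forall k, h k s < 0.
    by move=> k'; rewrite ltNge; apply/negP => hk; apply: Hn; exists k'.
  have Hex : forall k', exists d, 0 < d /\ forall u, 0 <= u -> `|u - s| < d ->
        `|h k' u - h k' s| < - h k' s.
    move=> k'; have [d d0 Hd'] := Hc k' s s0 (- h k' s) (eqbRL (oppr_gt0 _) (Hneg k')).
    by exists d.
  have [dk Hdk] := choice Hex.
  have [d d0 Hdd] := @exists_small K dk (fun k' => (Hdk k').1).
  have Hnear : forall u, 0 <= u -> `|u - s| < d -> forall k', h k' u < 0.
    move=> u u0 us k'; have := (Hdk k').2 u u0 (lt_trans us (Hdd k')).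
    move/ltr_normlP => [_ h2]; have := Hneg k'; lra.
  have : lbound Bs (s + d).
    move=> b [b0 [k' hb]]; have sb : s <= b by apply: (ge_inf hlb); split => //; exists k'.
    rewrite leNgt; apply/negP => bsd.
    have : `|b - s| < d by rewrite ger0_norm ?subr_ge0 //; lra.
    by move=> /(Hnear b b0) /(_ k'); rewrite ltNge hb.
  by move=> /(lb_le_inf ne); rewrite -/s; lra.
have [k1 hk1] := K2.
have sp : 0 < s.
  rewrite lt_neqAle s0 andbT; apply/negP => /eqP s_0.
  rewrite -s_0 in hk1; have := H0 k1; lra.
have minp : forall d, 0 < d -> [/\ 0 < Num.min s d, Num.min s d <= s & Num.min s d <= d].
  move=> d d0; rewrite lt_min sp d0; split => //; rewrite ge_min lexx ?orbT //.
have K3 : forall k, h k s <= 0.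
  move=> k'; rewrite leNgt; apply/negP => hp.
  have [d d0 Hd'] := Hc k' s s0 _ hp.
  have [m0 m1 m2] := minp d d0.
  set m := Num.min s d in m0 m1 m2.
  have u0 : 0 <= s - m / 2 by lra.
  have := Hd' (s - m / 2) u0.
  have -> : s - m / 2 - s = - (m / 2) by ring.
  rewrite normrN ger0_norm; last by lra.
  move=> /(_ ltac:(lra)) /ltr_normlP [h1 _].
  have := K1 (s - m / 2) u0 ltac:(lra) k'; lra.
have hz : h k1 s = 0 by apply/le_anti; rewrite K3 hk1.
have [dv Hdv dv0] := Hd k1 s sp (le_trans st tT) K3 hz.
have [d d0 Hl] := @deriv_left (h k1) s dv Hdv dv0.
have [m0 m1 m2] := minp d d0.
set m := Num.min s d in m0 m1 m2.
have := Hl (m / 2) ltac:(lra) ltac:(lra).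
have := K1 (s - m / 2) ltac:(lra) ltac:(lra) k1.
rewrite hz; lra.
Qed.
End Ana.
Section D.
Variable R : realType.
Lemma der_rat (a b g t : R) : 0 <= g -> 0 <= t ->
  is_derive t 1 (fun u => a + b / (1 + g * u)) (- (b * g) / (1 + g * t) ^+ 2).
Proof.
move=> g0 t0.
have p : 0 < 1 + g * t by apply: ltr_wpDr => //; apply: mulr_ge0.
have Hg : is_derive t 1 (fun u : R => g * u) g.
  have := @is_deriveZ R R R id g t 1 1 (is_derive_id _ _).

  rewrite /GRing.scale /= mulr1 => H; exact: H.
have H1 : is_derive t 1 (fun u : R => 1 + g * u) g.
  have := @is_deriveD R R R (cst 1) (fun u => g * u) t 1 0 g (is_derive_cst _ _ _) Hg.
  rewrite add0r => H; exact: H.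
have H2 := @is_deriveV R (fun u : R => 1 + g * u) t g 1 (lt0r_neq0 p) H1.
have H3 := @is_deriveZ R R R _ b t 1 _ H2.
have H4 := @is_deriveD R R R (cst a) _ t 1 0 _ (is_derive_cst _ _ _) H3.
apply: is_derive_eq.
by rewrite add0r /GRing.scale /=; ring.
Qed.


Lemma der_exp (a M t : R) :
  is_derive t 1 (fun u => a * expR (M * u)) (a * (M * expR (M * t))).
Proof.
have Hg : is_derive t 1 (fun u : R => M * u) M.
  have := @is_deriveZ R R R id M t 1 1 (is_derive_id _ _).
  rewrite /GRing.scale /= mulr1 => H; exact: H.
have H2 := @is_derive1_comp R expR (fun u => M * u) t _ _ (is_derive_expR _) Hg.
have H3 := @is_deriveZ R R R _ a t 1 _ H2.
apply: is_derive_eq.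
by rewrite /GRing.scale /= (mulrC (expR _)).
Qed.
End D.

Lemma der_cont (R : realType) (f : R -> R) (t df : R) : is_derive t 1 f df -> {for t, continuous f}.
Proof.
move=> H; apply/differentiable_continuous/derivable1_diffP.
exact: (@ex_derive _ _ _ _ _ _ _ H).
Qed.

Lemma le_sum_term (R : realType) (N : nat) (F : 'I_N -> R) i :
  (forall j, 0 <= F j) -> F i <= \sum_j F j.
Proof. by move=> H; rewrite (bigD1 i) //= lerDl sumr_ge0. Qed.

Section Alg.
Variables (R : realType) (N : nat) (B : 'I_N -> 'I_N -> R) (lam del c : 'I_N -> R).
Hypothesis B0 : forall i j, 0 <= B i j.
Hypothesis lam0 : forall i, 0 <= lam i.
Hypothesis del0 : forall i, 0 < del i.
Hypothesis c0 : forall i, 0 < c i.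

Definition Sm (y : 'I_N -> R) i := \sum_(j < N) B i j * y j.
Definition G (y : 'I_N -> R) i := (1 - y i) * c i * (lam i + Sm y i) - del i * y i.

Lemma Sm_le y u i : (forall j, y j <= u j) -> Sm y i <= Sm u i.
Proof. by move=> H; apply: ler_sum => j _; apply: ler_wpM2l. Qed.

Lemma Sm_ge0 y i : (forall j, 0 <= y j) -> 0 <= Sm y i.
Proof. by move=> H; apply: sumr_ge0 => j _; apply: mulr_ge0. Qed.

Lemma Sm_scale (k : R) y i : Sm (fun j => k * y j) i = k * Sm y i.
Proof. by rewrite /Sm mulr_sumr; apply: eq_bigr => j _; rewrite mulrCA. Qed.

Lemma coop_up y u i : (forall j, y j <= u j) -> y i = u i -> u i <= 1 -> G y i <= G u i.
Proof.
move=> H yi ui; rewrite /G yi lerD2r; apply: ler_wpM2l.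
  by apply: mulr_ge0; [rewrite subr_ge0|apply/ltW].
by rewrite lerD2l; apply: Sm_le.
Qed.

Lemma coop_lo y u i : (forall j, u j <= y j) -> y i = u i -> u i <= 1 -> G u i <= G y i.
Proof.
move=> H yi ui; rewrite /G yi lerD2r; apply: ler_wpM2l.
  by apply: mulr_ge0; [rewrite subr_ge0|apply/ltW].
by rewrite lerD2l; apply: Sm_le.
Qed.

Definition EQ (e : R) (p : 'I_N -> R) := forall i, del i * p i = c i * (1 - p i) * (lam i + e + Sm p i).

Lemma scale_up e p i (k : R) : EQ e p -> 0 <= e -> (forall j, 0 <= p j) -> p i <= 1 -> 1 <= k ->
  G (fun j => k * p j) i <= - (c i * (1 - p i) * e).
Proof.
move=> He e0 p0 p1 k1; rewrite /G Sm_scale (mulrCA (del i)) He.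
have S0 : 0 <= Sm p i := Sm_ge0 p i p0.
have ci := c0 i; have li := lam0 i; have pi0 := p0 i.
rewrite -subr_le0 opprK.
set S := Sm p i; set ci' := c i; set l := lam i; set pi := p i.
have -> : (1 - k * pi) * ci' * (l + k * S) - k * (ci' * (1 - pi) * (l + e + S)) + ci' * (1 - pi) * e
   = - ci' * (l * (k - 1) + k * (k - 1) * pi * S + (k - 1) * e * (1 - pi)) by ring.
rewrite mulNr oppr_le0; apply: mulr_ge0; first exact/ltW.
have k0 : 0 <= k - 1 by rewrite subr_ge0.
apply: addr_ge0; first apply: addr_ge0.
- exact: mulr_ge0.
- apply: mulr_ge0 => //; apply: mulr_ge0 => //; apply: mulr_ge0 => //; exact: (le_trans ler01 k1).
- by apply: mulr_ge0; [exact: mulr_ge0|rewrite subr_ge0].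
Qed.

Lemma scale_lo p i (k : R) : EQ 0 p -> 
  G (fun j => k * p j) i = c i * (1 - k) * (lam i + k * p i * Sm p i).
Proof.
move=> He; rewrite /G Sm_scale (mulrCA (del i)) He addr0.
ring.
Qed.

Lemma EQ_lt1 e p i : EQ e p -> 0 <= e -> (forall j, 0 <= p j) -> p i < 1.
Proof.
move=> He e0 p0; rewrite ltNge; apply/negP => p1.
have := He i; have S0 : 0 <= Sm p i := Sm_ge0 p i p0.
have d0 := del0 i; have ci := c0 i; have li := lam0 i.
have h1 : c i * (1 - p i) <= 0 by rewrite pmulr_rle0 // subr_le0.
have h2 : c i * (1 - p i) * (lam i + e + Sm p i) <= 0.
  by apply: mulr_le0_ge0 => //; rewrite !addr_ge0.
have h3 : 0 < del i * p i by apply: mulr_gt0 => //; apply: lt_le_trans p1.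
move=> E; rewrite E in h3; lra.
Qed.

Lemma EQ_mono e1 e2 x y i : EQ e1 x -> EQ e2 y -> 0 <= e1 -> e1 < e2 ->
  (forall j, 0 <= x j) -> (forall j, 0 < y j) -> x i < y i.
Proof.
move=> Hx Hy e10 e12 x0 y0.
have y0' : forall j, 0 <= y j by move=> j; apply/ltW.
pose F j := x j / y j.
have F0 : forall j, 0 <= F j by move=> j; apply: divr_ge0 => //; apply/ltW.
have [k _ Hk] := @eq_bigmax _ _ _ 0 i predT F isT (fun j _ => F0 j).
set t := \big[Order.max/0]_(j | predT j) F j in Hk.
have Ft : forall j, F j <= t by move=> j; rewrite /t; apply: le_bigmax_cond.
have xj : forall j, x j = F j * y j by move=> j; rewrite /F divfK // gt_eqF.
have [t1|t1] := ltP t 1.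
  by rewrite xj -{2}(mul1r (y i)) ltr_pM2r // (le_lt_trans (Ft i)).
exfalso.
have xk : x k = t * y k by rewrite xj Hk.
have xle : forall j, x j <= t * y j by move=> j; rewrite xj ler_pM2r // Ft.
have Sx : Sm x k <= t * Sm y k by rewrite -Sm_scale; apply: Sm_le.
have xk1 : x k < 1 := @EQ_lt1 e1 x k Hx e10 x0.
have yk1 : y k < 1 := @EQ_lt1 e2 y k Hy (le_trans e10 (ltW e12)) y0'.
have E1 := Hx k; have E2 := Hy k.
have d0 := del0 k; have ci := c0 k; have li := lam0 k; have yk := y0 k.
have Sy0 : 0 <= Sm y k := Sm_ge0 y k y0'.
rewrite xk in E1 xk1.
set A := lam k + e1 + Sm x k in E1.
set B' := lam k + e2 + Sm y k in E2.
have AB : A < t * B'.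
  rewrite /A /B' !mulrDr; rewrite -addrA -[X in _ < X]addrA.
  apply: ler_ltD; first by rewrite ler_peMl.
  have e20 : 0 <= e2 by exact: le_trans e10 (ltW e12).
  by apply: ltr_leD => //; apply: (lt_le_trans e12); rewrite ler_peMl.
have A0 : 0 <= A by rewrite /A !addr_ge0 //; apply: Sm_ge0.
have h : c k * ((1 - t * y k) * A) < c k * ((1 - y k) * (t * B')).
  rewrite ltr_pM2l //; apply: (@lt_le_trans _ _ ((1 - t * y k) * (t * B'))).
    by rewrite ltr_pM2l // subr_gt0.
  apply: ler_wpM2r; first by apply: mulr_ge0; [lra|rewrite /B'; apply: addr_ge0 => //; apply: addr_ge0 => //; lra].
  rewrite lerD2l lerN2 ler_peMl //.
have HH : del k * (t * y k) = t * (del k * y k) by ring.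
rewrite E1 E2 in HH.
have He : c k * ((1 - t * y k) * A) = c k * ((1 - y k) * (t * B')).
  by rewrite !mulrA HH; ring.
by rewrite He ltxx in h.
Qed.

Definition Hsol (x : R -> 'I_N -> R) := forall i, @WC R (fun t => x t i) /\
  forall t : R, 0 < t -> is_derive t 1 (fun u => x u i) (G (x t) i).

Lemma WC_sol_B x (w : R -> R) i : Hsol x -> (forall t, 0 <= t -> {for t, continuous w}) ->
  @WC R (fun t => w t - x t i).
Proof. by move=> Hx Hw; apply: WC_B; [apply: WC_cont|exact: (Hx i).1]. Qed.

Lemma WC_sol_B' x (w : R -> R) i : Hsol x -> (forall t, 0 <= t -> {for t, continuous w}) ->
  @WC R (fun t => x t i - w t).
Proof. by move=> Hx Hw; apply: WC_B; [exact: (Hx i).1|apply: WC_cont]. Qed.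

Definition S1 i := Sm (fun _ => 1) i.

Lemma sol_nonneg x : Hsol x -> (forall i, 0 <= x 0 i) -> forall t, 0 <= t -> forall i, 0 <= x t i.
Proof.
move=> Hx x0 t0 t00 i0.
have S10 : forall i, 0 <= S1 i by move=> i; apply: Sm_ge0.
pose M := 1 + 2 * \sum_i c i * S1 i.
have M1 : forall i, 2 * (c i * S1 i) <= M - 1.
  move=> i; rewrite /M addrC addKr ler_pM2l //; apply: (@le_sum_term R N (fun k => c k * S1 k) i).
  by move=> k; apply: mulr_ge0 => //; apply/ltW.
suff H : forall rho, 0 < rho -> - rho < x t0 i0.
  rewrite leNgt; apply/negP => hneg; have := H (- x t0 i0 / 2).
  rewrite divr_gt0 ?oppr_gt0 // => /(_ isT); lra.
move=> rho rho0.
pose r := Num.min rho 1.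
have r0 : 0 < r by rewrite lt_min rho0 ltr01.
have r1 : r <= 1 by rewrite ge_min lexx orbT.
have rr : r <= rho by rewrite ge_min lexx.
pose eta := r * expR (- (M * t0)).
have eta0 : 0 < eta by rewrite mulr_gt0 // expR_gt0.
pose h (i : 'I_N) (t : R) := (- eta) * expR (M * t) - x t i.
have HW : forall i, @WC R (h i).
  move=> i; apply: (@WC_sol_B x (fun t => - eta * expR (M * t)) i) => // t _.
  exact: (@der_cont R _ t _ (@der_exp R (- eta) M t)).
have HD : forall i t, 0 < t -> t <= t0 -> (forall k', h k' t <= 0) -> h i t = 0 ->
    exists2 dv, is_derive t 1 (h i) dv & dv < 0.
  move=> i t tp tt0 Hle Hz.
  have Hd := is_deriveB (@der_exp R (- eta) M t) ((Hx i).2 t tp).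
  exists ((- eta) * (M * expR (M * t)) - G (x t) i) => //.
  set a := eta * expR (M * t).
  have a0 : 0 < a by rewrite mulr_gt0 // expR_gt0.
  have a1 : a <= 1.
    rewrite /a /eta -mulrA -expRD.
    apply: le_trans r1; rewrite -[X in _ <= X]mulr1 ler_wpM2l //; first exact/ltW.
    have Mp : 0 <= M.
      rewrite /M; apply: addr_ge0 => //; apply: mulr_ge0 => //.
      by apply: sumr_ge0 => k _; apply: mulr_ge0 => //; apply/ltW.
    rewrite -expR0 ler_expR -mulrN -mulrDr; apply: mulr_ge0_le0 => //; lra.
  have xi : x t i = - a by move: Hz; rewrite /h /a mulNr; lra.
  have xj : forall j, - a * 1 <= x t j.
    by move=> j; have := Hle j; rewrite /h /a mulNr mulr1; lra.
  have h1 : - a * S1 i <= lam i + Sm (x t) i.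
    rewrite /S1 -Sm_scale; apply: (le_trans (Sm_le _ _ i xj)); rewrite lerDr; exact: lam0.
  have h2 : (1 + a) * c i * (- a * S1 i) <= (1 + a) * c i * (lam i + Sm (x t) i).
    by apply: ler_wpM2l => //; apply: mulr_ge0; [lra|exact/ltW].
  have h3 : a * ((1 + a) * (c i * S1 i)) <= a * (2 * (c i * S1 i)).
    apply: ler_wpM2l; [exact/ltW|apply: ler_wpM2r; [apply: mulr_ge0 => //; exact/ltW|lra]].
  have h4 : a * (2 * (c i * S1 i)) <= a * (M - 1) by apply: ler_wpM2l; [exact/ltW|exact: M1].
  have h5 : 0 < del i * a by apply: mulr_gt0.
  rewrite /G xi.
  have -> : - eta * (M * expR (M * t)) = - (M * a) by rewrite /a; ring.
  have E : (1 + a) * c i * (- a * S1 i) = - (a * ((1 + a) * (c i * S1 i))) by ring.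
  rewrite E in h2.
  have E2 : a * (M - 1) = a * M - a by ring.
  rewrite E2 in h4.
  have E3 : del i * - a = - (del i * a) by ring.
  rewrite E3 opprB (mulrC M).
  rewrite -(opprK (1 - - a)) opprB. 
  have -> : (- (- a - 1)) = 1 + a by ring.
  lra.
have H0 : forall i, h i 0 < 0.
  by move=> i; rewrite /h mulr0 expR0 mulr1; have := x0 i; lra.
have := @barrier R 'I_N h t0 HW HD H0 t0 t00 (lexx _) i0.
have E : eta * expR (M * t0) = r.
  by rewrite /eta -mulrA -expRD addNr expR0 mulr1.
rewrite /h mulNr E; lra.
Qed.

Lemma G_ext y z i : (forall j, y j = z j) -> G y i = G z i.
Proof. by move=> H; rewrite (boolp.funext H). Qed.

Lemma cst_cont (a t : R) : {for t, continuous (fun _ : R => a)}.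
Proof. exact: (@der_cont R _ t _ (is_derive_cst a t 1)). Qed.

Lemma sol_upper x P0 P e0 e K : Hsol x -> EQ e0 P0 -> EQ e P -> 0 < e0 -> 0 < e ->
  (forall j, 0 < P0 j) -> (forall j, 0 < P j) -> 0 < K ->
  (forall j, x 0 j < P0 j) -> (forall j, x 0 j < (1 + K) * P j) ->
  exists2 g, 0 < g & forall t, 0 <= t -> forall j,
    x t j < P0 j /\ x t j < (1 + K / (1 + g * t)) * P j.
Proof.
move=> Hx HP0 HP he0 he P00 P0' K0 x0P0 x0P.
have P00' : forall j, 0 <= P0 j by move=> j; apply/ltW.
have P0'' : forall j, 0 <= P j by move=> j; apply/ltW.
have P01 : forall j, P0 j < 1 by move=> j; exact: (@EQ_lt1 e0 P0 j HP0 (ltW he0) P00').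
have P1 : forall j, P j < 1 by move=> j; exact: (@EQ_lt1 e P j HP (ltW he) P0'').
have [g g0 Hg] := @exists_small R 'I_N (fun j => c j * (1 - P j) * e / K)
  (fun j => divr_gt0 (mulr_gt0 (mulr_gt0 (c0 j) (eqbRL (subr_gt0 _ _) (P1 j))) he) K0).
exists g => // t t0 j.
pose h (k : bool * 'I_N) (u : R) := if k.1 then x u k.2 - (P k.2 + (P k.2 * K) / (1 + g * u))
  else x u k.2 - P0 k.2.
have opg : forall u : R, 0 <= u -> 0 < 1 + g * u.
  by move=> u u0; apply: ltr_wpDr => //; apply: mulr_ge0 => //; apply/ltW.
have HW : forall k, @WC R (h k).
  case=> [[] j']; rewrite /h /=.
  - apply: (@WC_sol_B' x (fun u => P j' + (P j' * K) / (1 + g * u)) j') => // u u0.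
    exact: (@der_cont R _ u _ (@der_rat R (P j') (P j' * K) g u (ltW g0) u0)).
  - apply: (@WC_sol_B' x (fun u => P0 j') j') => // u u0; exact: cst_cont.
have HD : forall k u, 0 < u -> u <= t -> (forall k', h k' u <= 0) -> h k u = 0 ->
    exists2 dv, is_derive u 1 (h k) dv & dv < 0.
  move=> [[] j'] u up ut Hle Hz; rewrite /h /= in Hz *.
  - have Hd := is_deriveB ((Hx j').2 u up) (@der_rat R (P j') (P j' * K) g u (ltW g0) (ltW up)).
    exists (G (x u) j' - (- (P j' * K * g) / (1 + g * u) ^+ 2)) => //.
    pose l := 1 + K / (1 + g * u).
    have opu := opg u (ltW up).
    have l1 : 1 <= l by rewrite /l lerDl; apply: divr_ge0; [apply/ltW|apply/ltW].
    have E : forall k, P k + P k * K / (1 + g * u) = l * P k by move=> k; rewrite /l; ring.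
    have xle : forall k, x u k <= l * P k.
      by move=> k; have := Hle (true, k); rewrite /h /= E subr_le0.
    have xle0 : forall k, x u k <= P0 k.
      by move=> k; have := Hle (false, k); rewrite /h /= subr_le0.
    have xe : x u j' = l * P j' by move: Hz; rewrite E; move/eqP; rewrite subr_eq0 => /eqP.
    have h1 : G (x u) j' <= G (fun k => l * P k) j'.
      apply: coop_up => //; rewrite -xe; exact: le_trans (xle0 j') (ltW (P01 j')).
    have h2 := @scale_up e P j' l HP (ltW he) P0'' (ltW (P1 j')) l1.
    have h3 : P j' * K * g / (1 + g * u) ^+ 2 <= K * g.
      rewrite ler_pdivrMr; last by apply: exprn_gt0.
      have q1 : 1 <= (1 + g * u) ^+ 2.
        have q0 : 1 <= 1 + g * u by rewrite lerDl; apply: mulr_ge0; apply/ltW.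
        by rewrite expr2; apply: (le_trans q0); rewrite ler_peMr // (le_trans ler01 q0).
      apply: (@le_trans _ _ (K * g)).
        rewrite -mulrA; apply: ler_piMl; last exact: ltW (P1 j').
        by apply: mulr_ge0; apply/ltW.
      by rewrite ler_peMr // mulr_ge0 //; apply/ltW.
    have h4 : K * g < c j' * (1 - P j') * e.
      by have := Hg j'; rewrite ltr_pdivlMr // mulrC.
    rewrite mulNr opprK; lra.
  - have Hd := is_deriveB ((Hx j').2 u up) (is_derive_cst (P0 j') u 1).
    exists (G (x u) j' - 0) => //.
    have xle0 : forall k, x u k <= P0 k.
      by move=> k; have := Hle (false, k); rewrite /h /= subr_le0.
    have xe : x u j' = P0 j' by move: Hz; move/eqP; rewrite subr_eq0 => /eqP.
    have h1 : G (x u) j' <= G P0 j' by apply: coop_up => //; exact/ltW.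
    have h2 := @scale_up e0 P0 j' 1 HP0 (ltW he0) P00' (ltW (P01 j')) (lexx 1).
    rewrite (@G_ext _ P0 j') in h2; last by move=> k; rewrite mul1r.
    have h5 : 0 < c j' * (1 - P0 j') * e0.
      by rewrite !mulr_gt0 // subr_gt0.
    rewrite subr0; lra.
have H0 : forall k, h k 0 < 0.
  move=> [[] j']; rewrite /h /= ?mulr0 ?addr0 ?invr1 ?mulr1.
  - by have := x0P j'; rewrite mulrDl mul1r mulrC; lra.
  - by have := x0P0 j'; lra.
split.
- by have := @barrier R _ h t HW HD H0 t t0 (lexx t) (false, j); rewrite /h /=; lra.
- have := @barrier R _ h t HW HD H0 t t0 (lexx t) (true, j); rewrite /h /=.
  have -> : P j + P j * K / (1 + g * t) = (1 + K / (1 + g * t)) * P j by ring.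
  lra.
Qed.

Lemma sol_lower x ps K : Hsol x -> EQ 0 ps -> (forall j, 0 <= ps j) ->
  (forall t, 0 <= t -> forall j, 0 <= x t j) -> 0 < K -> K <= 1 / 2 ->
  (forall j, 0 < ps j -> (1 - K) * ps j < x 0 j) ->
  exists2 g, 0 < g & forall t, 0 <= t -> forall j, 0 < ps j ->
    (1 - K / (1 + g * t)) * ps j < x t j.
Proof.
move=> Hx Hps ps0 xnn K0 K2 x0ps.
have ps1 : forall j, ps j < 1 by move=> j; exact: (@EQ_lt1 0 ps j Hps (lexx 0) ps0).
pose kap j := lam j + ps j * Sm ps j.
have kpos : forall j, 0 < ps j -> 0 < kap j.
  move=> j pj.
  have h1 : 0 < c j * (1 - ps j) * (lam j + 0 + Sm ps j) by rewrite -Hps mulr_gt0.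
  have h2 : 0 < lam j + Sm ps j.
    by move: h1; rewrite addr0 pmulr_rgt0 // mulr_gt0 // subr_gt0.
  have h3 : ps j * (lam j + Sm ps j) <= kap j.
    rewrite /kap mulrDr lerD2r; apply: ler_piMl; [exact: lam0|exact: ltW (ps1 j)].
  by apply: lt_le_trans h3; apply: mulr_gt0.
have apos : forall j, 0 < (if 0 < ps j then c j * kap j / 2 else 1).
  by move=> j; case: ifP => pj //; rewrite divr_gt0 // mulr_gt0 // kpos.
have [g g0 Hg] := @exists_small R 'I_N _ apos.
exists g => // t t0 j pj.
pose h (k : 'I_N) (u : R) := if 0 < ps k then (ps k + (- (ps k * K)) / (1 + g * u)) - x u k else -1.
have opg : forall u : R, 0 <= u -> 0 < 1 + g * u.
  by move=> u u0; apply: ltr_wpDr => //; apply: mulr_ge0 => //; apply/ltW.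
have HW : forall k, @WC R (h k).
  move=> k; rewrite /h; case: (boolP (0 < ps k)) => _; last exact: WC_cst.
  apply: (@WC_sol_B x (fun u => ps k + (- (ps k * K)) / (1 + g * u)) k) => // u u0.
  exact: (@der_cont R _ u _ (@der_rat R (ps k) (- (ps k * K)) g u (ltW g0) u0)).
have HD : forall k u, 0 < u -> u <= t -> (forall k', h k' u <= 0) -> h k u = 0 ->
    exists2 dv, is_derive u 1 (h k) dv & dv < 0.
  move=> k u up ut Hle Hz; move: Hz; rewrite /h; case: ifP => pk; last first.
    by move/eqP; rewrite oppr_eq0 oner_eq0.
  move=> Hz.
  have Hd := is_deriveB (@der_rat R (ps k) (- (ps k * K)) g u (ltW g0) (ltW up)) ((Hx k).2 u up).
  exists (- (- (ps k * K) * g) / (1 + g * u) ^+ 2 - G (x u) k) => //.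
  pose w := K / (1 + g * u).
  pose mu := 1 - w.
  have opu := opg u (ltW up).
  have w0 : 0 < w by rewrite /w divr_gt0.
  have wK : w <= K.
    rewrite /w ler_pdivrMr //.
    have : K * 1 <= K * (1 + g * u).
      by apply: ler_wpM2l; [exact/ltW|rewrite lerDl; apply: mulr_ge0; apply/ltW].
    by rewrite mulr1.
  have E : forall k, ps k + - (ps k * K) / (1 + g * u) = mu * ps k by move=> k'; rewrite /mu /w; ring.
  have Lle : forall k', mu * ps k' <= x u k'.
    move=> k'; case: (boolP (0 < ps k')) => pk'.
      by have := Hle k'; rewrite /h pk' E subr_le0.
    have -> : ps k' = 0 by apply/le_anti; rewrite ps0 andbT leNgt pk'.
    by rewrite mulr0; apply: xnn; apply/ltW.
  have xe : x u k = mu * ps k by move: Hz; rewrite E; move/eqP; rewrite subr_eq0 => /eqP <-.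
  have h1 : G (fun k' => mu * ps k') k <= G (x u) k.
    apply: coop_lo => //; rewrite /mu.
    have := ps1 k; have := ps0 k; nra.
  rewrite (@scale_lo ps k mu Hps) in h1.
  have Hgk := Hg k; rewrite pk in Hgk.
  have kk := kpos k pk.
  have f1 : ps k * K * g / (1 + g * u) ^+ 2 <= w * g.
    have -> : ps k * K * g / (1 + g * u) ^+ 2 = w * (ps k * g / (1 + g * u)).
      rewrite /w; field; exact/lt0r_neq0.
    apply: ler_wpM2l; first exact/ltW.
    rewrite ler_pdivrMr //; apply: (@le_trans _ _ g).
      by apply: ler_piMl; [exact/ltW|exact: ltW (ps1 k)].
    have : g * 1 <= g * (1 + g * u).
      by apply: ler_wpM2l; [exact/ltW|rewrite lerDl; apply: mulr_ge0; apply/ltW].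
    by rewrite mulr1.
  have f2 : w * (c k * kap k / 2) <= c k * (1 - mu) * (lam k + mu * ps k * Sm ps k).
    have -> : 1 - mu = w by rewrite /mu; ring.
    have S0 : 0 <= ps k * Sm ps k by apply: mulr_ge0 => //; apply: Sm_ge0.
    have l0 := lam0 k.
    have m2 : 1 / 2 <= mu by rewrite /mu; lra.
    have : kap k / 2 <= lam k + mu * ps k * Sm ps k.
      rewrite /kap -mulrA; have : 1 / 2 * (ps k * Sm ps k) <= mu * (ps k * Sm ps k) by exact: (ler_wpM2r S0 m2).
      lra.
    move=> hk.
    have hk2 : w * (c k * (kap k / 2)) <= w * (c k * (lam k + mu * ps k * Sm ps k)).
      by apply: ler_wpM2l; [exact/ltW|apply: ler_wpM2l; [exact/ltW|exact hk]].
    have -> : w * (c k * kap k / 2) = w * (c k * (kap k / 2)) by rewrite mulrA.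
    have -> : c k * w * (lam k + mu * ps k * Sm ps k) = w * (c k * (lam k + mu * ps k * Sm ps k)) by ring.
    exact: hk2.
  have f3 : w * g < w * (c k * kap k / 2) by rewrite ltr_pM2l.
  have -> : - (- (ps k * K) * g) / (1 + g * u) ^+ 2 = ps k * K * g / (1 + g * u) ^+ 2 by ring.
  lra.
have H0 : forall k, h k 0 < 0.
  move=> k; rewrite /h; case: ifP => pk; last by rewrite ltrN10.
  rewrite mulr0 addr0 invr1 mulr1; have := x0ps k pk; lra.
have := @barrier R _ h t HW HD H0 t t0 (lexx t) j; rewrite /h pj.
have -> : ps j + - (ps j * K) / (1 + g * t) = (1 - K / (1 + g * t)) * ps j by ring.
lra.
Qed.

Lemma small_rat (K g e t : R) : 0 <= K -> 0 < g -> 0 < e -> K / (g * e) < t -> K / (1 + g * t) < e.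
Proof.
move=> K0 g0 e0 Ht.
have ge0 : 0 < g * e by apply: mulr_gt0.
move: Ht; rewrite ltr_pdivrMr // => Ht.
have t0 : 0 < t.
  by have := mulr_ge0 (ltW ge0) (ltW ge0); have : 0 <= K by []; move: Ht; nra.
rewrite ltr_pdivrMr; last by apply: ltr_wpDr => //; apply: mulr_ge0; apply/ltW.
nra.
Qed.

Lemma stable_core ps (eps : nat -> R) (Pe : nat -> 'I_N -> R) :
  EQ 0 ps -> (forall j, 0 <= ps j) ->
  (forall l, 0 < eps l) -> (forall l, EQ (eps l) (Pe l)) -> (forall l j, 0 < Pe l j) ->
  (forall l j, ps j < Pe l j) ->
  (forall e, 0 < e -> exists l, forall j, Pe l j < ps j + e) ->
  (forall e, 0 < e -> exists2 d, 0 < d & forall x, Hsol x -> (forall j, 0 <= x 0 j) ->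
     (forall j, `|x 0 j - ps j| < d) -> forall t, 0 <= t -> forall j, `|x t j - ps j| < e) /\
  (exists2 d, 0 < d & forall x, Hsol x -> (forall j, 0 <= x 0 j) ->
     (forall j, `|x 0 j - ps j| < d) -> forall j, (fun t => x t j) @ +oo --> ps j).
Proof.
move=> Hps ps0 eps0 HPe Pe0 psPe Hlim.
have ps1 : forall j, ps j < 1 by move=> j; exact: (@EQ_lt1 0 ps j Hps (lexx 0) ps0).
have core : forall l (K : R), 0 < K -> K <= 1 / 2 -> exists2 d, 0 < d & forall x, Hsol x ->
    (forall j, 0 <= x 0 j) -> (forall j, `|x 0 j - ps j| < d) ->
    (forall j, x 0 j < Pe l j) /\ (forall j, 0 < ps j -> (1 - K) * ps j < x 0 j).
  move=> l K K0 K2.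
  have apos : forall j, 0 < Num.min (Pe l j - ps j) (if 0 < ps j then K * ps j else 1).
    move=> j; rewrite lt_min subr_gt0 psPe /=; case: ifP => pj //.
    exact: mulr_gt0.
  have [d d0 Hd] := @exists_small R 'I_N _ apos.
  exists d => // x _ _ Hx0; split => j.
    have := Hd j; rewrite lt_min => /andP [h1 _].
    by have := Hx0 j; move/ltr_normlP => [_ h2]; lra.
  move=> pj; have := Hd j; rewrite lt_min pj => /andP [_ h1].
  by have := Hx0 j; move/ltr_normlP => [h2 _]; lra.
split.
- move=> e e0.
  have [l Hl] := Hlim e e0.
  pose K := Num.min (1 / 2) e.
  have K0 : 0 < K by rewrite lt_min e0 andbT divr_gt0.
  have K2 : K <= 1 / 2 by rewrite ge_min lexx.
  have Ke : K <= e by rewrite ge_min lexx orbT.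
  have [d d0 Hd] := core l K K0 K2.
  exists d => // x Hx x0 Hx0 t t0 j.
  have [xu xl] := Hd x Hx x0 Hx0.
  have xnn := @sol_nonneg x Hx x0.
  have x2 : forall k, x 0 k < (1 + 1) * Pe l k.
    by move=> k; have := xu k; have := Pe0 l k; lra.
  have [g1 g10 Hu] := @sol_upper x (Pe l) (Pe l) (eps l) (eps l) 1 Hx (HPe l) (HPe l) (eps0 l) (eps0 l)
     (Pe0 l) (Pe0 l) ltr01 xu x2.
  have [g2 g20 Hlo] := @sol_lower x ps K Hx Hps ps0 xnn K0 K2 xl.
  have [up _] := Hu t t0 j.
  apply/ltr_normlP; split; last by have := Hl j; lra.
  case: (boolP (0 < ps j)) => pj.
  + have := Hlo t t0 j pj.
    have w0 : 0 <= K / (1 + g2 * t).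
      by apply: divr_ge0; [exact/ltW|apply: addr_ge0 => //; apply: mulr_ge0 => //; exact/ltW].
    have wK : K / (1 + g2 * t) <= K.
      rewrite ler_pdivrMr; last by apply: ltr_wpDr => //; apply: mulr_ge0 => //; exact/ltW.
      have : K * 1 <= K * (1 + g2 * t).
        by apply: ler_wpM2l; [exact/ltW|rewrite lerDl; apply: mulr_ge0 => //; exact/ltW].
      by rewrite mulr1.
    have : K / (1 + g2 * t) * ps j <= e * 1.
      exact: (ler_pM w0 (ps0 j) (le_trans wK Ke) (ltW (ps1 j))).
    rewrite mulr1 mulrBl mul1r; lra.
  + have -> : ps j = 0 by apply/le_anti; rewrite ps0 andbT leNgt.
    by have := xnn t t0 j; lra.
- have [d d0 Hd] := core 0%N (1 / 2) ltac:(lra) (lexx _).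
  exists d => // x Hx x0 Hx0 j.
  have [xu xl] := Hd x Hx x0 Hx0.
  have xnn := @sol_nonneg x Hx x0.
  have [g2 g20 Hlo] := @sol_lower x ps (1 / 2) Hx Hps ps0 xnn ltac:(lra) (lexx _) xl.
  apply/cvgrPdist_lt => e e0.
  have e2 : 0 < e / 2 by rewrite divr_gt0.
  have [l Hl] := Hlim _ e2.
  pose K' := \sum_k Pe 0%N k / Pe l k.
  have rat0 : forall k, 0 <= Pe 0%N k / Pe l k by move=> k; apply: divr_ge0; apply/ltW.
  have K'k : forall k, Pe 0%N k / Pe l k <= K' by move=> k; exact: (@le_sum_term R N (fun k => Pe 0%N k / Pe l k) k).
  have K'0 : 0 < K'.
    apply: lt_le_trans (K'k j); apply: divr_gt0; exact: Pe0.
  have x0K : forall k, x 0 k < (1 + K') * Pe l k.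
    move=> k; apply: (lt_le_trans (xu k)).
    have : Pe 0%N k <= K' * Pe l k by rewrite -ler_pdivrMr //; exact: K'k.
    have := Pe0 l k; rewrite mulrDl mul1r; lra.
  have [g1 g10 Hu] := @sol_upper x (Pe 0%N) (Pe l) (eps 0%N) (eps l) K' Hx (HPe 0%N) (HPe l) (eps0 0%N) (eps0 l)
     (Pe0 0%N) (Pe0 l) K'0 xu x0K.
  exists (K' / (g1 * (e / 2)) + (1 / 2) / (g2 * e)); split; first by rewrite realE; apply/orP; left;
    apply: addr_ge0; apply: divr_ge0; rewrite ?mulr_ge0 //; try lra; apply/ltW.
  move=> t Ht.
  have q1 : 0 <= K' / (g1 * (e / 2)) by apply: divr_ge0; [exact/ltW|apply: mulr_ge0; apply/ltW].
  have q2 : 0 <= (1 / 2) / (g2 * e) by apply: divr_ge0; [lra|apply: mulr_ge0; apply/ltW].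
  have t0 : 0 <= t by lra.
  have s1 : K' / (1 + g1 * t) < e / 2 by apply: small_rat => //; [exact/ltW|lra].
  have s2 : (1 / 2) / (1 + g2 * t) < e by apply: small_rat => //; lra.
  have [_ up] := Hu t t0 j.
  rewrite distrC; apply/ltr_normlP; split.
  + case: (boolP (0 < ps j)) => pj.
      have := Hlo t t0 j pj.
      have : (1 / 2) / (1 + g2 * t) * ps j <= e * 1.
        apply: ler_pM; [apply: divr_ge0; [lra|apply: addr_ge0 => //; apply: mulr_ge0 => //; exact/ltW]|exact: ps0|exact/ltW|exact: ltW (ps1 j)].
      rewrite mulr1 mulrBl mul1r; lra.
    have -> : ps j = 0 by apply/le_anti; rewrite ps0 andbT leNgt.
    by have := xnn t t0 j; lra.
  + have : K' / (1 + g1 * t) * Pe l j <= e / 2 * 1.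
      apply: ler_pM; [apply: divr_ge0; [exact/ltW|apply: addr_ge0 => //; apply: mulr_ge0 => //; exact/ltW]|exact: ltW (Pe0 l j)|exact/ltW|].
      have : Pe l j < 1 by apply: (@EQ_lt1 (eps l) (Pe l) j (HPe l) (ltW (eps0 l))) => k; exact/ltW.
      exact: ltW.
    have := Hl j; move: up; rewrite mulrDl mul1r; lra.
Qed.

Definition stableH ps :=
  (forall e, 0 < e -> exists2 d, 0 < d & forall x, Hsol x -> (forall j, 0 <= x 0 j) ->
     (forall j, `|x 0 j - ps j| < d) -> forall t, 0 <= t -> forall j, `|x t j - ps j| < e) /\
  (exists2 d, 0 < d & forall x, Hsol x -> (forall j, 0 <= x 0 j) ->
     (forall j, `|x 0 j - ps j| < d) -> forall j, (fun t => x t j) @ +oo --> ps j).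

Lemma main_core (pbar : 'I_N -> R) (pe : R -> 'I_N -> R) (eps : nat -> R) :
  (forall e, 0 < e -> (forall j, 0 < pe e j) /\ EQ e (pe e)) ->
  (forall l, 0 < eps l) -> (forall l, eps l.+1 < eps l) -> eps @ \oo --> 0 ->
  (forall ps, EQ 0 ps -> (forall j, 0 <= ps j) -> (forall j, ps j < 1) -> stableH ps -> ps = pbar) ->
  forall j, (fun l => pe (eps l) j) @ \oo --> pbar j.
Proof.
move=> Hpe eps0 epsd epsc Hu.
pose u (j : 'I_N) (l : nat) := pe (eps l) j.
have upos : forall j l, 0 < u j l by move=> j l; exact: (Hpe _ (eps0 l)).1.
have HPe : forall l, EQ (eps l) (pe (eps l)) by move=> l; exact: (Hpe _ (eps0 l)).2.
have dec : forall j l, u j l.+1 < u j l.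
  move=> j l; apply: (@EQ_mono (eps l.+1) (eps l) _ _ j (HPe l.+1) (HPe l) (ltW (eps0 _)) (epsd l)).
    by move=> k; apply/ltW; apply: upos.
  by move=> k; apply: upos.
have ninc : forall j, nonincreasing_seq (u j).
  by move=> j; apply/nonincreasing_seqP => n; exact/ltW.
have lb : forall j, has_lbound (range (u j)).
  by move=> j; exists 0 => _ [n _ <-]; exact/ltW.
have cv : forall j, u j @ \oo --> inf (u j @` setT) by move=> j; exact: nonincreasing_cvgn.
pose ps j := inf (u j @` setT).
have psle : forall j l, ps j <= u j l by move=> j l; apply: (ge_inf (lb j)); exists l.
have ps0 : forall j, 0 <= ps j.
  move=> j; apply: lb_le_inf; first by exists (u j 0%N); exists 0%N.
  by move=> _ [n _ <-]; exact/ltW.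
have pslt : forall l j, ps j < pe (eps l) j by move=> l j; exact: le_lt_trans (psle j l.+1) (dec j l).
have EQps : EQ 0 ps.
  move=> i.
  have Hs : (fun l => Sm (fun k => u k l) i) @ \oo --> Sm ps i.
    apply: (@cvg_big _ _ +%R 0 predT add_continuous) => k _.
    exact: cvgM (cvg_cst _) (cv k).
  have H : (fun l => del i * u i l - c i * (1 - u i l) * (lam i + eps l + Sm (fun k => u k l) i))
      @ \oo --> (del i * ps i - c i * (1 - ps i) * (lam i + 0 + Sm ps i)).
    apply: cvgB; first exact: cvgM (cvg_cst _) (cv i).
    apply: cvgM; first exact: cvgM (cvg_cst _) (cvgB (cvg_cst _) (cv i)).
    by apply: cvgD => //; apply: cvgD => //; exact: cvg_cst.
  have E : (fun l => del i * u i l - c i * (1 - u i l) * (lam i + eps l + Sm (fun k => u k l) i))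
      = fun _ => 0.
    by apply: boolp.funext => l; rewrite /u (HPe l i) subrr.
  rewrite E in H.
  have := cvg_lim _ H; rewrite lim_cst // => E0.
  by apply/eqP; rewrite -subr_eq0 -E0.
have ps1 : forall j, ps j < 1 by move=> j; exact: (@EQ_lt1 0 ps j EQps (lexx 0) ps0).
have Hlim : forall e, 0 < e -> exists l, forall j, pe (eps l) j < ps j + e.
  move=> e e0.
  have : \forall l \near \oo, forall j, `|ps j - u j l| < e.
    by apply: filter_forall => j; move/cvgrPdist_lt: (cv j) => /(_ e e0).
  move=> /filter_ex [l Hl]; exists l => j.
  by have := Hl j; move/ltr_normlP => [h _]; rewrite /u in h; lra.
have [H1 H2] := @stable_core ps eps (fun l => pe (eps l)) EQps ps0 eps0 HPe (fun l j => upos j l) pslt Hlim.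
have Eps := Hu ps EQps ps0 ps1 (conj H1 H2).
by move=> j; rewrite -Eps; exact: cv.
Qed.


End Alg.
Theorem proposition3 (R : realType) (N : nat)
  (B : 'I_N -> 'I_N -> R) (lam del : 'I_N -> R) (q : 'I_N -> R -> R)
  (S : set ('I_N -> R)) (s : 'I_N -> R)
  (pbar : 'I_N -> R) (pbar_eps : R -> 'I_N -> R) :
  (forall i j, 0 <= B i j) ->
  (forall i, B i i = 0) ->
  weakly_connected B ->
  (forall i, 0 <= lam i) ->
  (forall i, 0 < del i) ->
  (forall i (x : R), 0 <= x -> 0 < q i x <= 1) ->
  (forall i (x y : R), 0 <= x -> x < y -> q i y < q i x) ->
  (forall i (x y t : R), 0 <= x -> 0 <= y -> x != y -> 0 < t < 1 ->
     q i (t * x + (1 - t) * y) < t * q i x + (1 - t) * q i y) ->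
  (forall i, {within `[0, +oo[, continuous (q i)}) ->
  (forall i (x : R), 0 < x -> derivable (q i) x 1) ->
  (forall i (x : R), 0 < x -> {for x, continuous (derive1 (q i))}) ->
  (forall p, S p -> forall i, 0 <= p i) ->
  (forall p p' (t : R), S p -> S p' -> 0 <= t <= 1 ->
     S (fun i => t * p i + (1 - t) * p' i)) ->
  S s ->
  (* pbar is the unique stable equilibrium of the ODE for this s *)
  is_stable_equilibrium B lam del q s pbar ->
  (forall p, is_stable_equilibrium B lam del q s p -> p = pbar) ->
  (* pbar_eps e is the unique strictly positive solution with lam + e 1 *)
  (forall e : R, 0 < e ->
     (forall i, 0 < pbar_eps e i) /\
     eq_equation B (fun i => lam i + e) del q s (pbar_eps e)) ->
  (forall e : R, 0 < e -> forall p, (forall i, 0 < p i) ->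
     eq_equation B (fun i => lam i + e) del q s p -> p = pbar_eps e) ->
  forall eps : nat -> R,
    (forall l, 0 < eps l) ->
    (forall l, eps l.+1 < eps l) ->
    eps @ \oo --> 0 ->
    forall i, (fun l => pbar_eps (eps l) i) @ \oo --> pbar i.
Proof.
move=> B0 Bd wc lam0 del0 qpos qdec qconv qcont qder qdcont Snn Sconv Ss Hstab Huniq Heps Hepsu
  eps eps0 epsd epsc.
pose c := fun j => q j (s j).
have c0 : forall j, 0 < c j by move=> j; have /andP [] := qpos j (s j) (Snn s Ss j).
have toEQ : forall e, 0 < e -> EQ R N B lam del c e (pbar_eps e).
  move=> e e0 j; have := (Heps e e0).2 j.
  rewrite -/(Sm R N B (pbar_eps e) j) => H.
  have cj : c j != 0 by apply: lt0r_neq0.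
  have E : del j * pbar_eps e j = c j * ((c j)^-1 * del j * pbar_eps e j).
    by rewrite !mulrA mulfV // mul1r.
  rewrite E; move/eqP: H; rewrite subr_eq0 => /eqP <-; rewrite /c; ring.
apply: (@main_core R N B lam del c B0 lam0 del0 c0 pbar pbar_eps eps) => //.
- by move=> e e0; split; [exact: (Heps e e0).1|exact: toEQ].
move=> ps EQps ps0 ps1 [H1 H2]; apply: Huniq.
have solH : forall x, is_solution B lam del q s x -> Hsol R N B lam del c x.
  move=> x Hx i; split; first exact: WC_within (Hx i).1.
  exact: (Hx i).2.
split; [split|split].
- by move=> i; rewrite ps0 ltW.
- move=> i; rewrite /sis_field -/(Sm R N B ps i); have := EQps i; rewrite addr0 /c => ->; ring.
- move=> e e0; have [d d0 Hd] := H1 e e0; exists d => // x Hx Hc Hx0 t t0 i.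
  apply: (Hd x (solH x Hx)) => // j; by have /andP [] := Hc j.
- have [d d0 Hd] := H2; exists d => // x Hx Hc Hx0 i.
  apply: (Hd x (solH x Hx)) => // j; by have /andP [] := Hc j.
Qed.
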